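(* Let $S$ be a finite $2$-group and suppose there are $A,B\in\mathcal{A}(S)$ with $AB=S$. If $C_B(a)=A\cap B$ for every $a\in A\setminus(A\cap B)$, then $\mathcal{A}(S)=\{A,B\}$ and every involution of $S$ lies in $A\cup B$.
   Context: For a $p$-group $S$, $\mathcal{A}(S)$ denotes the set of elementary abelian subgroups of $S$ of maximal rank (maximal order). *)

(* Defs.v *)
From mathcomp Require Import all_boot all_fingroup all_solvable.
Set Implicit Arguments. Unset Strict Implicit. Unset Printing Implicit Defensive.
Local Open Scope group_scope.

Definition maxElemAb (gT : finGroupType) (p : nat) (S : {set gT}) :
  {set {group gT}} := 'E_p^('r_p(S))(S).

(* Main.v *)
Require Import Defs.
From mathcomp Require Import all_boot all_fingroup all_solvable.
Local Open Scope group_scope.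
Set Implicit Arguments.

Lemma inv_in_union (gT : finGroupType) (S A B : {group gT}) :
  A \in maxElemAb 2 S -> B \in maxElemAb 2 S ->
  A * B = S ->
  (forall a, a \in A :\: (A :&: B) -> 'C_B[a] = A :&: B) ->
  forall x, x \in S -> x ^+ 2 = 1 -> x \in A :|: B.
Proof.
move=> /pnElemP[_ /(abelemP (isT : prime 2)) [cA eA] _].
move=> /pnElemP[_ /(abelemP (isT : prime 2)) [cB eB] _] AB hC x.
rewrite -AB => /mulsgP[a b aA bB ->] x2.
have ea : a * a = 1 by rewrite -(eA a aA) expgS expg1.
have eb : b * b = 1 by rewrite -(eB b bB) expgS expg1.
have ab: commute a b.
  have : a * b * (a * b) = 1 by rewrite -x2 expgS expg1.
  move=> h.
  have ia : a^-1 = a by apply/eqP; rewrite eq_invg_mul ea.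
  have ib : b^-1 = b by apply/eqP; rewrite eq_invg_mul eb.
  have iab : (a * b)^-1 = a * b by apply/eqP; rewrite eq_invg_mul h.
  by rewrite /commute -iab invMg ia ib.
case aB: (a \in B).
  by rewrite inE (groupM aB bB) orbT.
have : b \in 'C_B[a] by rewrite inE bB; apply/cent1P.
rewrite hC; last by rewrite !inE aA aB.
by case/setIP => bA _; rewrite inE (groupM aA bA).
Qed.

Lemma sub_union (gT : finGroupType) (E A B : {group gT}) :
  E \subset A :|: B -> E \subset A \/ E \subset B.
Proof.
move=> sE.
case sEA: (E \subset A); first by left.
right; case/subsetPn: (negbT sEA) => e eE eA.
have eB : e \in B by move/subsetP: sE => /(_ e eE); rewrite inE (negbTE eA).
apply/subsetP => y yE.
case yA: (y \in A).
  have: e * y \in A :|: B by move/subsetP: sE; apply; apply: groupM.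
  rewrite inE; case/orP => h.
    by move: eA; rewrite -(groupMr _ yA) h.
  by rewrite -(groupMl _ eB).
by move/subsetP: sE => /(_ y yE); rewrite inE yA.
Qed.

Theorem mainTheorem5 (gT : finGroupType) (S A B : {group gT}) :
  2.-group S ->
  A \in maxElemAb 2 S -> B \in maxElemAb 2 S ->
  A * B = S ->
  (forall a, a \in A :\: (A :&: B) -> 'C_B[a] = A :&: B) ->
  maxElemAb 2 S = [set A; B] /\
  (forall x, x \in S -> #[x] = 2%N -> x \in A :|: B).
Proof.
move=> _ AS BS AB hC.
have inv := @inv_in_union gT S A B AS BS AB hC.
split; last by move=> x xS ox; apply: inv => //; rewrite -ox expg_order.
apply/setP => E; rewrite in_set2; apply/idP/idP.
  move=> ES; have := ES.
  case/pnElemP=> sES /(abelemP (isT : prime 2)) [_ eE] _.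
  have sE : E \subset A :|: B.
    by apply/subsetP => y yE; apply: inv; [apply: (subsetP sES) | apply: eE].
  have cE := card_pnElem ES.
  case: (@sub_union gT E A B sE) => h; apply/orP; [left|right]; apply/eqP; apply: group_inj;
    apply/eqP; rewrite eqEcard h cE ?(card_pnElem AS) ?(card_pnElem BS) leqnn //.
by case/orP => /eqP ->.
Qed.
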